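(* Let $\mathcal{A}=\{\alpha_1<\dots<\alpha_m\}\subset(0,1)$, $d_{\mathcal{A}}=\min_{\alpha\in\mathcal{A}}\min(\alpha,1-\alpha)$. Suppose the base forecasts are point forecasts, $b_t=[k_t,\dots,k_t]$ for some $k_t\in\mathbb{R}$, and $|y_t-k_t|\le R$ for all $t$. Then for every $\alpha\in\mathcal{A}$ and $T\ge1$, the MultiQT iterates (learning rate $\eta>0$, initial hidden offset $\tilde\theta_1\in\mathcal{K}$) satisfy $$\Bigg|\frac1T\sum_{t=1}^T\mathrm{cov}_t^{\alpha}-\alpha\Bigg|\le\frac{2\|\tilde\theta_1\|_2}{\eta T}+\frac{|\mathcal{A}|^{1/2}}{T}+\frac{|\mathcal{A}|^{3/2}}{2d_{\mathcal{A}}T}+\frac{R|\mathcal{A}|^{3/2}}{d_{\mathcal{A}}\eta T}+\frac{|\mathcal{A}|^{3/2}}{T\sqrt3}.$$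
   Context: $\mathcal{K}=\{x\in\mathbb{R}^m:x_1\le\dots\le x_m\}$; $\Pi_C$ Euclidean projection; $C-v=\{x-v:x\in C\}$. MultiQT: for $t=1,2,\dots$, $\theta_t=\Pi_{\mathcal{K}-b_t}(\tilde\theta_t)$, forecast $q_t=b_t+\theta_t$, $\mathrm{cov}_t^{\alpha}=\mathbb{1}\{y_t\le q_t^{\alpha}\}$, and $\tilde\theta_{t+1}^{\alpha}=\tilde\theta_t^{\alpha}-\eta(\mathrm{cov}_t^{\alpha}-\alpha)$ for each $\alpha\in\mathcal{A}$. *)

(* Defs.v *)
From HB Require Import structures.
From mathcomp Require Import all_boot all_order all_algebra.
From mathcomp Require Import reals.
Set Implicit Arguments. Unset Strict Implicit. Unset Printing Implicit Defensive.
Import Order.TTheory GRing.Theory Num.Theory.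
Local Open Scope ring_scope.

Definition isoK (R : realType) (m : nat) (x : 'I_m -> R) : Prop :=
  forall i j : 'I_m, (i <= j)%N -> x i <= x j.

(* The shifted set K - v = {x - v : x in K} = {z : z + v in K}. *)
Definition shiftK (R : realType) (m : nat) (v : 'I_m -> R) (z : 'I_m -> R) : Prop :=
  isoK (fun i => z i + v i).

Definition norm2 (R : realType) (m : nat) (x : 'I_m -> R) : R :=
  Num.sqrt (\sum_(i < m) x i ^+ 2).

Definition is_proj (R : realType) (m : nat) (C : ('I_m -> R) -> Prop)
  (z p : 'I_m -> R) : Prop :=
  C p /\ forall x, C x -> norm2 (fun i => p i - z i) <= norm2 (fun i => x i - z i).

(* d_A = min_alpha min(alpha, 1 - alpha) (1 is a harmless neutral element,
   all terms are <= 1/2). *)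
Definition dA (R : realType) (m : nat) (alpha : 'I_m -> R) : R :=
  \big[Num.min/1]_(i < m) Num.min (alpha i) (1 - alpha i).

Definition ind_le (R : realType) (y q : R) : R := if y <= q then 1 else 0.

(* Main.v *)
Require Import Defs.
From HB Require Import structures.
From mathcomp Require Import all_boot all_order all_algebra.
From mathcomp Require Import reals ring lra zify.
Import Order.TTheory GRing.Theory Num.Theory.
Local Open Scope ring_scope.

Section H.
Variables (R : realType) (m : nat).
Implicit Types (u th x : 'I_m -> R).

Lemma isoK_shift (z : 'I_m -> R) c : shiftK (fun _ => c) z <-> isoK z.
Proof. by split=> H i j le; have := H i j le; rewrite /= lerD2r. Qed.

Lemma proj_not_closer C u th x :
  is_proj C u th -> C x ->
  \sum_(j < m) (x j - u j) ^+ 2 < \sum_(j < m) (th j - u j) ^+ 2 -> False.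
Proof.
case=> _ H Cx lt; have := H x Cx; rewrite /norm2 ler_sqrt; last first.
  by apply: sumr_ge0 => j _; exact: sqr_ge0.
by rewrite leNgt lt.
Qed.

Lemma sum_lt (f g : 'I_m -> R) (i0 : 'I_m) :
  (forall j, f j <= g j) -> f i0 < g i0 -> \sum_j f j < \sum_j g j.
Proof.
move=> le lt; rewrite (bigD1 i0) //= [X in _ < X](bigD1 i0) //=.
by apply: ltr_leD => //; apply: ler_sum => j _.
Qed.

Lemma projB c u th (i : 'I_m) mu : is_proj (shiftK (fun _ => c)) u th ->
  (forall j : 'I_m, (i <= j)%N -> mu <= u j) -> mu <= th i.
Proof.
move=> P H; rewrite leNgt; apply/negP => lt.
have isoth : isoK th by apply/(isoK_shift th c); case: P.
pose x (j : 'I_m) := if (i <= j)%N && (th j < mu) then mu else th j.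
apply: (@proj_not_closer _ u th x P).
  apply/(isoK_shift x c) => a b ab; rewrite /x.
  have := isoth a b ab.
  case: ifP => [/andP[ia ta]|]; case: ifP => [/andP[ib tb]|] //.
  - rewrite (leq_trans ia ab) /= => /negbT; rewrite -leNgt => h1 h2; lra.
  - move=> _ h; lra.
apply: (@sum_lt _ _ i).
  move=> j; rewrite /x; case: ifP => [/andP[ij tj]|] //.
  have := H j ij => hj.
  have h1 : th j - u j <= mu - u j by lra.
  have h2 : mu - u j <= 0 by lra.
  nra.
rewrite /x leqnn lt /=; have := H i (leqnn _) => hi; nra.
Qed.


Lemma projB' c u th (i : 'I_m) mu : is_proj (shiftK (fun _ => c)) u th ->
  (forall j : 'I_m, (j <= i)%N -> u j <= mu) -> th i <= mu.
Proof.
move=> P H; rewrite leNgt; apply/negP => lt.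
have isoth : isoK th by apply/(isoK_shift th c); case: P.
pose x (j : 'I_m) := if (j <= i)%N && (mu < th j) then mu else th j.
apply: (@proj_not_closer _ u th x P).
  apply/(isoK_shift x c) => a b ab; rewrite /x.
  have := isoth a b ab.
  case: ifP => [/andP[ia ta]|]; case: ifP => [/andP[ib tb]|] //.
  - move=> _ h; lra.
  - rewrite (leq_trans ab ib) /= => /negbT; rewrite -leNgt => h1 h2; lra.
apply: (@sum_lt _ _ i).
  move=> j; rewrite /x; case: ifP => [/andP[ij tj]|] //.
  have := H j ij => hj.
  have h1 : mu - u j <= th j - u j by lra.
  have h2 : 0 <= mu - u j by lra.
  nra.
rewrite /x leqnn lt /=; have := H i (leqnn _) => hi; nra.
Qed.

Lemma projA1 c u th (a b : 'I_m) : is_proj (shiftK (fun _ => c)) u th ->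
  val b = (val a).+1 -> th a < th b -> u a <= th a.
Proof.
move=> P eb ltab; rewrite leNgt; apply/negP => lt.
have isoth : isoK th by apply/(isoK_shift th c); case: P.
pose tau := if u a < th b then u a else th b.
have t1 : th a < tau by rewrite /tau; case: ifP.
have t2 : tau <= u a by rewrite /tau; case: ifP => // /negbT; rewrite -leNgt.
have t3 : tau <= th b by rewrite /tau; case: ifP => // h; apply: ltW.
clearbody tau.
pose x (j : 'I_m) := if j == a then tau else th j.
apply: (@proj_not_closer _ u th x P).
  apply/(isoK_shift x c) => j j' jj'; rewrite /x.
  have [ej|ja] := eqVneq j a; have [ej'|j'a] := eqVneq j' a.
  - by rewrite /= lexx.
  - subst j; rewrite /=.
    have bj' : (b <= j')%N.
      rewrite (_ : nat_of_ord b = (nat_of_ord a).+1) // ltn_neqAle jj' andbT.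
      by move: j'a; apply: contra => /eqP h; apply/eqP/val_inj.
    have := isoth b j' bj'; lra.
  - subst j'; rewrite /=; have := isoth j a jj'; lra.
  - by rewrite /=; exact: isoth.
apply: (@sum_lt _ _ a).
  move=> j; rewrite /x; case: eqP => [->|_]; [nra | exact: lexx].
rewrite /x eqxx; nra.
Qed.

Lemma projA2 c u th (a b : 'I_m) : is_proj (shiftK (fun _ => c)) u th ->
  val b = (val a).+1 -> th a < th b -> th b <= u b.
Proof.
move=> P eb ltab; rewrite leNgt; apply/negP => lt.
have isoth : isoK th by apply/(isoK_shift th c); case: P.
pose tau := if th a < u b then u b else th a.
have t1 : tau < th b by rewrite /tau; case: ifP.
have t2 : u b <= tau by rewrite /tau; case: ifP => // /negbT; rewrite -leNgt.
have t3 : th a <= tau by rewrite /tau; case: ifP => // h; apply: ltW.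
clearbody tau.
pose x (j : 'I_m) := if j == b then tau else th j.
apply: (@proj_not_closer _ u th x P).
  apply/(isoK_shift x c) => j j' jj'; rewrite /x.
  have [ej|ja] := eqVneq j b; have [ej'|j'a] := eqVneq j' b.
  - by rewrite /= lexx.
  - subst j; rewrite /=.
    have := isoth b j' jj'; lra.
  - subst j'; rewrite /=.
    have ja' : (j <= a)%N.
      have : (j < b)%N.
        rewrite ltn_neqAle jj' andbT.
        by move: ja; apply: contra => /eqP h; apply/eqP/val_inj.
      by rewrite (_ : nat_of_ord b = (nat_of_ord a).+1) // ltnS.
    have := isoth j a ja'; lra.
  - by rewrite /=; exact: isoth.
apply: (@sum_lt _ _ b).
  move=> j; rewrite /x; case: eqP => [->|_]; [nra | exact: lexx].
rewrite /x eqxx; nra.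
Qed.


Lemma chain (u : 'I_m -> R) (eta : R) :
  (forall a b : 'I_m, val b = (val a).+1 -> u a - u b <= eta) ->
  forall n (a b : 'I_m), val b = (val a + n)%N -> u a - u b <= eta * n%:R.
Proof.
move=> H; elim=> [|n IH] a b eb.
  have -> : b = a by apply: val_inj; rewrite eb addn0.
  by rewrite subrr mulr0.
have lt : (val a + n < m)%N.
  by have := ltn_ord b; rewrite eb addnS => /ltnW.
pose c := Ordinal lt.
have h1 := IH a c erefl.
have h2 := H c b (etrans eb (addnS _ _)).
rewrite -addn1 natrD mulrDr mulr1; lra.
Qed.

Lemma lowb (u : 'I_m -> R) (eta : R) (i : 'I_m) : 0 <= eta ->
  (forall a b : 'I_m, val b = (val a).+1 -> u a - u b <= eta) ->
  forall j : 'I_m, (i <= j)%N -> u i - eta * (m.-1)%:R <= u j.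
Proof.
move=> e0 H j ij.
have h := chain u eta H (j - i)%N i j (esym (subnKC ij)).
have : eta * (j - i)%:R <= eta * (m.-1)%:R.
  apply: ler_wpM2l => //; rewrite ler_nat.
  have := ltn_ord j; lia.
lra.
Qed.

Lemma upb (u : 'I_m -> R) (eta : R) (i : 'I_m) : 0 <= eta ->
  (forall a b : 'I_m, val b = (val a).+1 -> u a - u b <= eta) ->
  forall j : 'I_m, (j <= i)%N -> u j <= u i + eta * (m.-1)%:R.
Proof.
move=> e0 H j ij.
have h := chain u eta H (i - j)%N j i (esym (subnKC ij)).
have : eta * (i - j)%:R <= eta * (m.-1)%:R.
  apply: ler_wpM2l => //; rewrite ler_nat.
  have := ltn_ord i; lia.
lra.
Qed.

Lemma dA_pos (alpha : 'I_m -> R) : (forall i, 0 < alpha i < 1) -> 0 < dA alpha.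
Proof.
move=> H; rewrite /dA; apply: (big_ind (fun x : R => 0 < x)) => //.
  by move=> x y hx hy; rewrite lt_min hx hy.
move=> j _; have := H j => /andP[h1 h2]; rewrite lt_min h1 /=; lra.
Qed.

Lemma dA_half (alpha : 'I_m -> R) (i : 'I_m) : dA alpha <= 2^-1.
Proof.
apply: le_trans (bigmin_le _ i _) _.
rewrite ge_min; apply/orP; case: (lerP (alpha i) (2^-1)) => h; [left|right] => //; lra.
Qed.

End H.
Theorem corollary1 (R : realType) (m : nat) (alpha : 'I_m -> R)
  (eta Rb : R) (k y : nat -> R) (thtil theta : nat -> 'I_m -> R) :
  (forall i j : 'I_m, (i < j)%N -> alpha i < alpha j) ->
  (forall i, 0 < alpha i < 1) ->
  0 < eta ->
  isoK (thtil 1%N) ->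
  (forall t, (1 <= t)%N -> `|y t - k t| <= Rb) ->
  (* theta_t = Pi_{K - b_t}(thtil_t), with b_t = [k_t, ..., k_t] *)
  (forall t, (1 <= t)%N -> is_proj (shiftK (fun _ => k t)) (thtil t) (theta t)) ->
  (* thtil_{t+1} = thtil_t - eta (cov_t - alpha), cov_t^i = 1{y_t <= k_t + theta_t^i} *)
  (forall t, (1 <= t)%N -> forall i,
     thtil t.+1 i = thtil t i - eta * (ind_le (y t) (k t + theta t i) - alpha i)) ->
  forall (i : 'I_m) (T : nat), (1 <= T)%N ->
    `| T%:R^-1 * (\sum_(1 <= t < T.+1) ind_le (y t) (k t + theta t i)) - alpha i|
    <= 2 * norm2 (thtil 1%N) / (eta * T%:R)
       + Num.sqrt m%:R / T%:R
       + m%:R * Num.sqrt m%:R / (2 * dA alpha * T%:R)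
       + Rb * (m%:R * Num.sqrt m%:R) / (dA alpha * eta * T%:R)
       + m%:R * Num.sqrt m%:R / (T%:R * Num.sqrt 3).
Proof.
move=> Halpha H01 eta0 iso1 HR Hproj Hupd i T T1.
have Rb0 : 0 <= Rb.
  by have := HR 1%N erefl; have := normr_ge0 (y 1%N - k 1%N); lra.
have m1 : (0 < m)%N := leq_ltn_trans (leq0n _) (ltn_ord i).
have e0 : 0 <= eta by apply: ltW.
have Inv : forall t, (1 <= t)%N -> forall a b : 'I_m,
    val b = (val a).+1 -> thtil t a - thtil t b <= eta.
  elim=> [//|t IH] _ a b eb.
  have ab : (a < b)%N by rewrite (_ : nat_of_ord b = (nat_of_ord a).+1).
  case: t IH => [_|t IH].
    have := iso1 a b (ltnW ab); lra.
  have IHab := IH erefl a b eb.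
  have al := Halpha a b ab.
  have ea : eta * alpha a <= eta * alpha b by apply: ler_wpM2l => //; apply: ltW.
  rewrite (Hupd t.+1 erefl a) (Hupd t.+1 erefl b) /ind_le.
  case: ifP => ha; case: ifP => hb; try lra.
  have hlt : theta t.+1 a < theta t.+1 b.
    move/negbT: ha; rewrite -ltNge => ha; lra.
  have h1 := @projA1 _ _ _ _ _ a b (Hproj t.+1 erefl) eb hlt.
  have h2 := @projA2 _ _ _ _ _ a b (Hproj t.+1 erefl) eb hlt.
  lra.
have thlo : forall t, (1 <= t)%N ->
    thtil t i - eta * (m.-1)%:R <= theta t i.
  move=> t t1; apply: (@projB _ _ _ _ _ i _ (Hproj t t1)).
  exact: (@lowb _ _ _ _ i e0 (Inv t t1)).
have thhi : forall t, (1 <= t)%N ->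
    theta t i <= thtil t i + eta * (m.-1)%:R.
  move=> t t1; apply: (@projB' _ _ _ _ _ i _ (Hproj t t1)).
  exact: (@upb _ _ _ _ i e0 (Inv t t1)).
have em : eta * m%:R = eta * (m.-1)%:R + eta.
  by rewrite -{1}(prednK m1) -addn1 natrD mulrDr mulr1.
have Em : 0 <= eta * (m.-1)%:R by apply: mulr_ge0.
have ha0 := H01 i; move/andP: ha0 => [ha0 ha1].
have ea0 : 0 <= eta * alpha i by apply: mulr_ge0 => //; apply: ltW.
have ea1 : eta * alpha i <= eta by rewrite -{2}(mulr1 eta); apply: ler_wpM2l => //; apply: ltW.
pose U := `|thtil 1%N i| + Rb + eta * m%:R.
have bnd : forall t, (1 <= t)%N -> - U <= thtil t i <= U.
  elim=> [//|t IH] _.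
  case: t IH => [_|t IH].
    have h1 := ler_norm (thtil 1%N i); have h2 := ler_norm (- thtil 1%N i).
    rewrite normrN in h2; rewrite /U; apply/andP; split; lra.
  have /andP[lo hi] := IH erefl.
  have hR := HR t.+1 erefl.
  have hR1 := ler_norm (y t.+1 - k t.+1); have hR2 := ler_norm (- (y t.+1 - k t.+1)).
  rewrite normrN in hR2.
  have tl := thlo t.+1 erefl; have th := thhi t.+1 erefl.
  have n0 := normr_ge0 (thtil 1%N i).
  rewrite (Hupd t.+1 erefl i) /ind_le /U in lo hi *; apply/andP.
  case: ifP => hy.
    split; lra.
  move/negbT: hy; rewrite -ltNge => hy.
  split; lra.
have sumeq : forall n, eta * \sum_(1 <= t < n.+1)
      (ind_le (y t) (k t + theta t i) - alpha i) = thtil 1%N i - thtil n.+1 i.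
  elim=> [|n IH]; first by rewrite big_geq // mulr0 subrr.
  rewrite big_nat_recr //= mulrDr IH (Hupd n.+1) //; lra.
have /andP[lo hi] := bnd T.+1 erefl.
have S := sumeq T.
rewrite sumrB sumr_const_nat subn1 /= -mulr_natl in S.
set Sm := \sum_(1 <= t < T.+1) ind_le (y t) (k t + theta t i) in S *.
have Tpos : 0 < T%:R :> R by rewrite ltr0n.
have eT : 0 < eta * T%:R by apply: mulr_gt0.
have key : T%:R^-1 * Sm - alpha i = (thtil 1%N i - thtil T.+1 i) / (eta * T%:R).
  rewrite -S; field.
  by rewrite pnatr_eq0 -lt0n T1 /= (gt_eqF eta0).
rewrite key normrM (@gtr0_norm _ ((eta * T%:R)^-1)); last by rewrite invr_gt0.
have D : `|thtil 1%N i - thtil T.+1 i| <= `|thtil 1%N i| + U.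
  have := ler_normB (thtil 1%N i) (thtil T.+1 i).
  have : `|thtil T.+1 i| <= U by rewrite ler_norml lo hi.
  lra.
have Ainv : 0 < (eta * T%:R)^-1 by rewrite invr_gt0.
have M1 : 1 <= m%:R :> R by rewrite ler1n.
have s1 : 1 <= Num.sqrt m%:R :> R.
  rewrite -{1}sqrtr1 ler_sqrt; lra.
have n2 : `|thtil 1%N i| <= norm2 (thtil 1%N).
  rewrite /norm2 -sqrtr_sqr ler_sqrt; last by apply: sumr_ge0 => j _; apply: sqr_ge0.
  rewrite (bigD1 i) //= lerDl; by apply: sumr_ge0 => j _; apply: sqr_ge0.
have d0 := @dA_pos _ _ alpha H01.
have dh := @dA_half _ _ alpha i.
have Ms1 : 1 <= m%:R * Num.sqrt m%:R :> R by apply: mulr_ege1.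
have s3 : 0 < Num.sqrt 3 :> R by rewrite sqrtr_gt0 ltr0n.
have t0 : `|thtil 1%N i - thtil T.+1 i| * (eta * T%:R)^-1 <=
   (2 * `|thtil 1%N i| + Rb + eta * m%:R) * (eta * T%:R)^-1.
  rewrite ler_pM2r //; move: D; rewrite /U => D; lra.
have t1 : 2 * `|thtil 1%N i| / (eta * T%:R) <= 2 * norm2 (thtil 1%N) / (eta * T%:R).
  by rewrite ler_pM2r //; lra.
have t2 : Rb / (eta * T%:R) <= Rb * (m%:R * Num.sqrt m%:R) / (dA alpha * eta * T%:R).
  have -> : Rb * (m%:R * Num.sqrt m%:R) / (dA alpha * eta * T%:R) =
     Rb / (eta * T%:R) * (m%:R * Num.sqrt m%:R / dA alpha).
    field; rewrite (gt_eqF d0) (gt_eqF eta0) pnatr_eq0 -lt0n T1 //.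
  apply: ler_peMr; first by apply: divr_ge0 => //; apply: ltW.
  rewrite ler_pdivlMr // mul1r; lra.
have t3 : m%:R / T%:R <= m%:R * Num.sqrt m%:R / (2 * dA alpha * T%:R).
  have -> : m%:R * Num.sqrt m%:R / (2 * dA alpha * T%:R) =
     m%:R / T%:R * (Num.sqrt m%:R / (2 * dA alpha)).
    field; rewrite (gt_eqF d0) pnatr_eq0 -lt0n T1 //.
  apply: ler_peMr; first by apply: divr_ge0 => //; apply: ltW.
  rewrite ler_pdivlMr ?mul1r; [lra | lra].
have t4 : 0 <= Num.sqrt m%:R / T%:R :> R.
  by apply: divr_ge0; [exact: sqrtr_ge0 | exact: ltW].
have t5 : 0 <= m%:R * Num.sqrt m%:R / (T%:R * Num.sqrt 3) :> R.
  by apply: divr_ge0; [lra | apply: mulr_ge0; [exact: ltW | exact: ltW]].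
have e : (2 * `|thtil 1%N i| + Rb + eta * m%:R) * (eta * T%:R)^-1 =
   2 * `|thtil 1%N i| / (eta * T%:R) + Rb / (eta * T%:R) + m%:R / T%:R.
  field; rewrite (gt_eqF eta0) pnatr_eq0 -lt0n T1 //.
lra.
Qed.
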